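(* Let $G$ be a finite simple graph and $k$ a positive integer. Let $G'$ be the graph formed from $G$ by adding a vertex-disjoint copy of the complete bipartite graph $K_{k-1,2k}$, and let $G^\phi_k$ be the complement of $G'$. Then $G$ contains $K_{k,k}$ as a subgraph if and only if $\widetilde{\alpha}(G^\phi_k) \ge 2k$.
   Context: For disjoint vertex sets $S,T$, $E(S,T)$ is the set of edges with one end in $S$ and one in $T$. An $(s,t)$-bipartite-hole in a graph $F$ consists of two disjoint sets of vertices $S,T$ with $|S|=s$, $|T|=t$ and $E(S,T)=\emptyset$. The bipartite-hole-number $\widetilde{\alpha}(F)$ is the least integer $r$ which can be written as $r=s+t-1$ for some positive integers $s,t$ such that $F$ contains no $(s,t)$-bipartite-hole; equivalently the maximum $r$ such that $F$ has an $(s,t)$-bipartite-hole for all non-negative integers $s,t$ with $s+t=r$. $K_{a,b}$ denotes the complete bipartite graph with parts of sizes $a$ and $b$. *)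

(* Defs.v *)
From mathcomp Require Import all_boot.
Set Implicit Arguments. Unset Strict Implicit. Unset Printing Implicit Defensive.

Definition has_bhole (V : finType) (F : rel V) (s t : nat) : bool :=
  [exists S : {set V}, exists T : {set V},
     [&& #|S| == s, #|T| == t, [disjoint S & T]
       & [forall x in S, forall y in T, ~~ F x y]]].

(* r can be written as s + t - 1 with s, t positive and F has no (s,t)-hole. *)
Definition bhn_witness (V : finType) (F : rel V) (r : nat) : bool :=
  [exists s : 'I_r.+1, (0 < s) && ~~ has_bhole F s (r.+1 - s)].

Lemma bhn_witness_exists (V : finType) (F : rel V) : exists r, bhn_witness F r.
Proof.
exists #|V|.+1; apply/existsP.
have Hlt : #|V|.+1 < #|V|.+2 by [].
exists (Ordinal Hlt); rewrite /= subSnn.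
apply/negP=> /existsP [S /existsP [T /and4P [HS _ _ _]]].
move: (max_card (mem S)); rewrite (eqP HS); by rewrite ltnn.
Qed.

Definition bhn (V : finType) (F : rel V) : nat := ex_minn (bhn_witness_exists F).

Definition has_Kab (V : finType) (e : rel V) (a b : nat) : Prop :=
  exists A B : {set V}, [/\ #|A| = a, #|B| = b, [disjoint A & B] &
     forall x y, x \in A -> y \in B -> e x y].

Definition Gprime_vertex (V : finType) (k : nat) : finType :=
  (V + ('I_k.-1 + 'I_(2 * k)))%type.

Definition Gprime_rel (V : finType) (e : rel V) (k : nat) : rel (Gprime_vertex V k) :=
  fun u v =>
    match u, v with
    | inl x, inl y => e x y
    | inr (inl _), inr (inr _) => true
    | inr (inr _), inr (inl _) => true
    | _, _ => false
    end.

Definition Gphi (V : finType) (e : rel V) (k : nat) : rel (Gprime_vertex V k) :=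
  fun u v => (u != v) && ~~ @Gprime_rel V e k u v.

(* Main.v *)
Require Import Defs.
From mathcomp Require Import all_boot.
From mathcomp Require Import zify.
Set Implicit Arguments. Unset Strict Implicit. Unset Printing Implicit Defensive.

Lemma bhn_geP (V : finType) (F : rel V) n :
  (n <= bhn F) <-> (forall r, r < n -> ~~ bhn_witness F r).
Proof.
rewrite /bhn; case: ex_minnP => m Hm Hmin; split.
- move=> Hn r Hr; apply/negP => Hw.
  by move: (leq_trans Hn (Hmin r Hw)); rewrite leqNgt Hr.
- move=> H; rewrite leqNgt; apply/negP => Hmn. by move: (H m Hmn); rewrite Hm.
Qed.

Lemma disjP (T : finType) (A B : {set T}) :
  reflect (forall x, x \in A -> x \in B -> False) [disjoint A & B].
Proof.
rewrite disjoints_subset; apply: (iffP subsetP) => H x xA.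
  by move: (H x xA); rewrite inE => /negP.
by rewrite inE; apply/negP; exact: H x xA.
Qed.

Lemma sub_card (T : finType) (A : {set T}) n : n <= #|A| ->
  exists B : {set T}, B \subset A /\ #|B| = n.
Proof.
elim: n => [|n IH] H.
  by exists set0; rewrite sub0set cards0.
have [B [HBA HB]] := IH (ltnW H).
have : 0 < #|A :\: B| by rewrite cardsD (setIidPr HBA) HB subn_gt0.
rewrite card_gt0 => /set0Pn [x]; rewrite inE => /andP [xB xA].
exists (x |: B); rewrite subUset sub1set xA HBA cardsU1 xB HB; split => //.
Qed.

Lemma bhole_mono (V : finType) (F : rel V) s t s' t' :
  has_bhole F s t -> s' <= s -> t' <= t -> has_bhole F s' t'.
Proof.
move=> /existsP [S /existsP [T /and4P [/eqP HS /eqP HT Hd /forallP Hf]]] Hs Ht.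
have h1 : s' <= #|S| by rewrite HS.
have [S' [HS' cS']] := sub_card h1.
have h2 : t' <= #|T| by rewrite HT.
have [T' [HT' cT']] := sub_card h2.
apply/existsP; exists S'; apply/existsP; exists T'.
rewrite cS' cT' !eqxx /=.
apply/andP; split.
  apply/disjP => x xS xT.
  move/disjP: Hd => /(_ x (subsetP HS' x xS)); apply; exact: (subsetP HT' x xT).
apply/forallP => x; apply/implyP => xS; apply/forallP => y; apply/implyP => yT.
move: (Hf x) => /implyP /(_ (subsetP HS' x xS)) /forallP /(_ y) /implyP; apply.
exact: (subsetP HT' y yT).
Qed.

Theorem lemma12 (V : finType) (e : rel V)
  (e_sym : symmetric e) (e_irr : irreflexive e) (k : nat) (k_pos : 0 < k) :
  has_Kab e k k <-> 2 * k <= bhn (@Gphi V e k).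
Proof.
set L := [set (inr (inl i) : Gprime_vertex V k) | i : 'I_k.-1].
set R := [set (inr (inr j) : Gprime_vertex V k) | j : 'I_(2 * k)].
have cL : #|L| = k.-1 by rewrite card_imset ?card_ord // => i j [].
have cR : #|R| = 2 * k by rewrite card_imset ?card_ord // => i j [].
split.
- move=> [A [B [cA cB dAB HAB]]].
  have hL : has_bhole (@Gphi V e k) k.-1 (2 * k).
    apply/existsP; exists L; apply/existsP; exists R.
    rewrite cL cR !eqxx /=; apply/andP; split.
      by apply/disjP => x /imsetP [i _ ->] /imsetP [j _].
    apply/forallP => x; apply/implyP => /imsetP [i _ ->].
    apply/forallP => y; apply/implyP => /imsetP [j _ ->].
    by rewrite /Gphi /Gprime_rel /=.
  have hR : has_bhole (@Gphi V e k) (2 * k) k.-1.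
    apply/existsP; exists R; apply/existsP; exists L.
    rewrite cL cR !eqxx /=; apply/andP; split.
      by apply/disjP => x /imsetP [i _ ->] /imsetP [j _].
    apply/forallP => x; apply/implyP => /imsetP [i _ ->].
    apply/forallP => y; apply/implyP => /imsetP [j _ ->].
    by rewrite /Gphi /Gprime_rel /=.
  have hK : has_bhole (@Gphi V e k) k k.
    apply/existsP; exists (inl @: A); apply/existsP; exists (inl @: B).
    rewrite !card_imset; last (by move=> x y []); last (by move=> x y []).
    rewrite cA cB !eqxx /=; apply/andP; split.
      apply/disjP => x /imsetP [a aA ->] /imsetP [b bB [eab]].
      by move/disjP: dAB => /(_ a aA); apply; rewrite eab.
    apply/forallP => x; apply/implyP => /imsetP [a aA ->].
    apply/forallP => y; apply/implyP => /imsetP [b bB ->].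
    by rewrite /Gphi /Gprime_rel /= HAB // andbF ?andbF.
  apply/bhn_geP => r Hr; apply/negP => /existsP [s /andP [s0 /negP]]; apply.
  have sr := ltn_ord s.
  case: (leqP s k.-1) => h1.
    apply: (bhole_mono hL) => //; lia.
  case: (leqP s k) => h2.
    apply: (bhole_mono hK) => //; lia.
  apply: (bhole_mono hR) => //; lia.
- move/bhn_geP => H.
  have Hk' : k < (2 * k).-1.+1 by lia.
  have Hr : (2 * k).-1 < 2 * k by lia.
  move: (H (2 * k).-1 Hr) => /existsPn /(_ (Ordinal Hk')).
  rewrite /= k_pos /= negbK.
  have -> : (2 * k).-1.+1 - k = k by lia.
  move=> /existsP [S /existsP [T /and4P [/eqP cS /eqP cT dST /forallP Hf]]].
  have Hedge : forall x y, x \in S -> y \in T -> Gprime_rel e x y.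
    move=> x y xS yT.
    move: (Hf x) => /implyP /(_ xS) /forallP /(_ y) /implyP /(_ yT).
    rewrite /Gphi negb_and => /orP [/negPn/eqP exy|/negPn h]; last exact: h.
    by exfalso; move/disjP: dST => /(_ x xS); apply; rewrite exy.
  have /set0Pn [x0 x0S] : S != set0 by rewrite -card_gt0 cS.
  have /set0Pn [y0 y0T] : T != set0 by rewrite -card_gt0 cT.
  have Hxy := Hedge x0 y0 x0S y0T.
  have smallL : forall X : {set Gprime_vertex V k}, X \subset L -> #|X| = k -> False.
    move=> X XL cX; move: (subset_leq_card XL); rewrite cX cL; lia.
  move: Hxy; rewrite /Gprime_rel.
  case: x0 x0S => [a|[i|j]] x0S; case: y0 y0T => [b|[i'|j']] y0T //= _.
  + exists [set x | inl x \in S], [set y | inl y \in T].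
    have eS : S = inl @: [set x | inl x \in S].
      apply/setP => x; apply/idP/imsetP.
        case: x => [x|x] xS; first by exists x; rewrite ?inE.
        by move: (Hedge _ _ xS y0T); rewrite /Gprime_rel; case: x {xS}.
      by move=> [z]; rewrite inE => zS ->.
    have eT : T = inl @: [set y | inl y \in T].
      apply/setP => x; apply/idP/imsetP.
        case: x => [x|x] xT; first by exists x; rewrite ?inE.
        by move: (Hedge _ _ x0S xT); rewrite /Gprime_rel; case: x {xT}.
      by move=> [z]; rewrite inE => zT ->.
    split.
    * have cA : #|[set x | inl x \in S]| = #|S|.
        by rewrite [in RHS]eS card_imset // => x y [].
      by rewrite cA cS.
    * have cB : #|[set x | inl x \in T]| = #|T|.
        by rewrite [in RHS]eT card_imset // => x y [].
      by rewrite cB cT.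
    * apply/disjP => x; rewrite !inE => xS xT.
      by move/disjP: dST => /(_ _ xS); apply.
    * move=> x y; rewrite !inE => xS yT; exact: (Hedge _ _ xS yT).
  + exfalso; apply: (smallL S) cS; apply/subsetP => x xS.
    move: (Hedge _ _ xS y0T); rewrite /Gprime_rel.
    case: x {xS} => [x|[x|x]] //= _; exact: imset_f.
  + exfalso; apply: (smallL T) cT; apply/subsetP => y yT.
    move: (Hedge _ _ x0S yT); rewrite /Gprime_rel.
    case: y {yT} => [y|[y|y]] //= _; exact: imset_f.
Qed.
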